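(* Let $r>0$ and let $Z$ be a set of homeomorphisms $[0,r)\to[0,r)$ such that: $(\alpha)z\ge\alpha$ for all $z\in Z$ and $\alpha\in[0,r)$; $\mathrm{supp}(z)$ is an interval for every $z\in Z$; and $\bigcup_{z\in Z}\mathrm{supp}(z)$ is dense in $(0,r)$. Let $f$ be a permutation of $[0,r)$ that commutes with every $z\in Z$, is right-continuous at every point of $[0,r)$, and has finitely many points of discontinuity. Then $f$ is continuous.
   Context: Maps act on the right. For a permutation $x$ of a set $S$, $\mathrm{fix}(x)$ is its set of fixed points and $\mathrm{supp}(x)=S\setminus\mathrm{fix}(x)$. *)

(* Defs.v *)
From Stdlib Require Import Reals List.
Open Scope R_scope.

(* The half-open interval [0,r) as a predicate on R. Maps on [0,r) are
   represented by functions R -> R; only their values on [0,r) matter. *)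
Definition Ico0 (r : R) (x : R) : Prop := 0 <= x < r.

Definition maps_into (r : R) (f : R -> R) : Prop :=
  forall x, Ico0 r x -> Ico0 r (f x).

Definition cont_at (r : R) (f : R -> R) (x : R) : Prop :=
  forall eps, 0 < eps -> exists delta, 0 < delta /\
    forall y, Ico0 r y -> Rabs (y - x) < delta -> Rabs (f y - f x) < eps.

Definition right_cont_at (r : R) (f : R -> R) (x : R) : Prop :=
  forall eps, 0 < eps -> exists delta, 0 < delta /\
    forall y, Ico0 r y -> x <= y -> y - x < delta -> Rabs (f y - f x) < eps.

Definition continuous_on (r : R) (f : R -> R) : Prop :=
  forall x, Ico0 r x -> cont_at r f x.

Definition is_perm (r : R) (f : R -> R) : Prop :=
  maps_into r f /\
  (forall x y, Ico0 r x -> Ico0 r y -> f x = f y -> x = y) /\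
  (forall y, Ico0 r y -> exists x, Ico0 r x /\ f x = y).

Definition is_homeo (r : R) (z : R -> R) : Prop :=
  maps_into r z /\ continuous_on r z /\
  exists g : R -> R, maps_into r g /\ continuous_on r g /\
    (forall x, Ico0 r x -> g (z x) = x) /\
    (forall y, Ico0 r y -> z (g y) = y).

Definition supp (r : R) (z : R -> R) (x : R) : Prop := Ico0 r x /\ z x <> x.

Definition is_interval (A : R -> Prop) : Prop :=
  forall a b c, A a -> A b -> a <= c <= b -> A c.

Definition dense_in_0r (r : R) (A : R -> Prop) : Prop :=
  forall x, 0 < x < r -> forall eps, 0 < eps ->
    exists y, A y /\ Rabs (y - x) < eps.

Definition finitely_many_discont (r : R) (f : R -> R) : Prop :=
  exists l : list R, forall x, Ico0 r x -> ~ cont_at r f x -> In x l.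

(* Main.v *)
Require Import Defs.
From Stdlib Require Import Reals List Lra Lia Classical Ranalysis5 FinFun.
Open Scope R_scope.

Fixpoint it (h : R -> R) (n : nat) (v : R) : R :=
  match n with O => v | S n => h (it h n v) end.

Lemma it_in r h n v : maps_into r h -> Ico0 r v -> Ico0 r (it h n v).
Proof. intros Hm Hv; induction n; simpl; auto. Qed.

Lemma cont_comp r h1 h2 t : Ico0 r t -> maps_into r h1 -> cont_at r h1 t ->
  cont_at r h2 (h1 t) -> cont_at r (fun y => h2 (h1 y)) t.
Proof.
  intros Ht Hm H1 H2 eps He.
  destruct (H2 eps He) as [d2 [Hd2 H2']].
  destruct (H1 d2 Hd2) as [d1 [Hd1 H1']].
  exists d1; split; [exact Hd1|].
  intros y Hy Hyd. apply H2'. apply Hm; auto. apply H1'; auto.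
Qed.

Lemma cont_ext r f1 f2 t : (forall y, Ico0 r y -> f1 y = f2 y) -> Ico0 r t ->
  cont_at r f1 t -> cont_at r f2 t.
Proof.
  intros He Ht H eps Heps. destruct (H eps Heps) as [d [Hd H']].
  exists d; split; auto. intros y Hy Hyd. rewrite <- !He; auto.
Qed.

Lemma cont_pt r f t : 0 < t < r -> cont_at r f t -> continuity_pt f t.
Proof.
  intros Ht H. unfold continuity_pt, continue_in, limit1_in, limit_in.
  intros eps Heps. destruct (H eps Heps) as [d [Hd H']].
  exists (Rmin d (Rmin t (r - t))). split.
  - apply Rmin_pos; auto. apply Rmin_pos; lra.
  - intros y [_ Hy]. simpl in Hy. simpl. unfold R_dist in *.
    assert (Hm1 := Rmin_l d (Rmin t (r-t))). assert (Hm2 := Rmin_r d (Rmin t (r-t))).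
    assert (Hm3 := Rmin_l t (r-t)). assert (Hm4 := Rmin_r t (r-t)).
    apply H'. unfold Ico0. apply Rabs_def2 in Hy. lra. lra.
Qed.

Lemma dense_between r A c d : 0 <= c -> c < d -> d <= r -> dense_in_0r r A ->
  exists y, A y /\ c < y < d.
Proof.
  intros Hc Hcd Hd HA.
  destruct (HA ((c+d)/2) ltac:(lra) ((d-c)/2) ltac:(lra)) as [y [Hy Hyd]].
  exists y; split; auto. apply Rabs_def2 in Hyd. lra.
Qed.

Lemma side_left r z x y u : is_interval (supp r z) -> z x = x ->
  supp r z y -> supp r z u -> y < x -> u < x.
Proof.
  intros HI Hx Hy Hu Hyx. destruct (Rlt_or_le u x) as [H|H]; auto.
  exfalso. assert (H0 : supp r z x) by (apply (HI y u x); auto; lra).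
  destruct H0; auto.
Qed.

Lemma side_right r z x y u : is_interval (supp r z) -> z x = x ->
  supp r z y -> supp r z u -> x < y -> x < u.
Proof.
  intros HI Hx Hy Hu Hyx. destruct (Rlt_or_le x u) as [H|H]; auto.
  exfalso. assert (H0 : supp r z x) by (apply (HI u y x); auto; lra).
  destruct H0; auto.
Qed.

Lemma lem_up r h v c : maps_into r h -> continuous_on r h ->
  (forall t, Ico0 r t -> h t >= t) ->
  Ico0 r v -> c < r -> (forall n, it h n v <= c) -> exists m, v <= m <= c /\ h m = m.
Proof.
  intros Hm Hc Hge Hv Hcr Hb.
  set (E := fun y => exists n, y = it h n v).
  assert (HE : bound E) by (exists c; intros y [n ->]; auto).
  assert (HE2 : exists y, E y) by (exists v; exists O; reflexivity).
  destruct (completeness E HE HE2) as [m [Hub Hlub]].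
  assert (Hvm : v <= m) by (apply Hub; exists O; auto).
  assert (Hmc : m <= c) by (apply Hlub; intros y [n ->]; auto).
  exists m. split; [lra|].
  assert (Hmi : Ico0 r m) by (unfold Ico0 in *; lra).
  assert (H1 := Hge m Hmi).
  destruct (Req_dec (h m) m) as [|Hne]; auto. exfalso.
  assert (Heps : 0 < h m - m) by lra.
  destruct (Hc m Hmi _ Heps) as [d [Hd Hd']].
  assert (exists y, E y /\ m - d < y) as [y [[n ->] Hy]].
  { apply NNPP; intro Hno.
    assert (m <= m - d) by (apply Hlub; intros y Hy; apply Rnot_lt_le; intro; apply Hno; eauto).
    lra. }
  assert (Hyi := it_in r h n v Hm Hv).
  assert (Hym : it h n v <= m) by (apply Hub; exists n; auto).
  assert (Hs : it h (S n) v <= m) by (apply Hub; exists (S n); auto).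
  simpl in Hs.
  assert (Habs : Rabs (it h n v - m) < d) by (apply Rabs_def1; lra).
  specialize (Hd' _ Hyi Habs). apply Rabs_def2 in Hd'. lra.
Qed.

Lemma lem_down r h v c : maps_into r h -> continuous_on r h ->
  (forall t, Ico0 r t -> h t <= t) ->
  Ico0 r v -> 0 <= c -> (forall n, c <= it h n v) -> exists m, c <= m <= v /\ h m = m.
Proof.
  intros Hm Hc Hge Hv Hc0 Hb.
  set (E := fun y => exists n, y = - it h n v).
  assert (HE : bound E) by (exists (-c); intros y [n ->]; specialize (Hb n); lra).
  assert (HE2 : exists y, E y) by (exists (-v); exists O; reflexivity).
  destruct (completeness E HE HE2) as [m' [Hub Hlub]].
  assert (Hvm : -v <= m') by (apply Hub; exists O; auto).
  assert (Hmc : m' <= -c) by (apply Hlub; intros y [n ->]; specialize (Hb n); lra).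
  exists (-m'). split; [lra|].
  assert (Hmi : Ico0 r (-m')) by (unfold Ico0 in *; lra).
  assert (H1 := Hge _ Hmi).
  destruct (Req_dec (h (-m')) (-m')) as [|Hne]; auto. exfalso.
  assert (Heps : 0 < -m' - h (-m')) by lra.
  destruct (Hc _ Hmi _ Heps) as [d [Hd Hd']].
  assert (exists y, E y /\ m' - d < y) as [y [[n ->] Hy]].
  { apply NNPP; intro Hno.
    assert (m' <= m' - d) by (apply Hlub; intros y Hy; apply Rnot_lt_le; intro; apply Hno; eauto).
    lra. }
  assert (Hyi := it_in r h n v Hm Hv).
  assert (Hym : - it h n v <= m') by (apply Hub; exists n; auto).
  assert (Hs : - it h (S n) v <= m') by (apply Hub; exists (S n); auto).
  simpl in Hs.
  assert (Habs : Rabs (it h n v - - m') < d) by (apply Rabs_def1; lra).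
  specialize (Hd' _ Hyi Habs). apply Rabs_def2 in Hd'. lra.
Qed.

Lemma mono r f a x p q : 0 <= a -> x <= r -> (forall t, a < t < x -> cont_at r f t) ->
  (forall s t, Ico0 r s -> Ico0 r t -> f s = f t -> s = t) ->
  a < p -> p < q -> q < x -> f p < f q ->
  forall u v, a < u -> u < v -> v < x -> f u < f v.
Proof.
  intros Ha Hx Hc Hinj Hap Hpq Hqx Hf u v Hau Huv Hvx.
  destruct (Rlt_or_le (f u) (f v)) as [|Hle]; auto. exfalso.
  assert (Hne : f u <> f v) by (intro E; apply Hinj in E; unfold Ico0; lra).
  set (H := fun l => f (p + l * (u - p)) - f (q + l * (v - q))).
  assert (Hin : forall s t l, a < s < x -> a < t < x -> 0 <= l <= 1 -> a < s + l*(t-s) < x).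
  { intros s t l Hs Ht Hl. destruct (Rle_or_lt s t).
    - assert (0 <= l*(t-s)) by (apply Rmult_le_pos; lra).
      assert (0 <= (1-l)*(t-s)) by (apply Rmult_le_pos; lra). nra.
    - assert (0 <= l*(s-t)) by (apply Rmult_le_pos; lra).
      assert (0 <= (1-l)*(s-t)) by (apply Rmult_le_pos; lra). nra. }
  assert (Hcont : forall l, 0 <= l <= 1 -> continuity_pt H l).
  { intros l Hl. unfold H. apply continuity_pt_minus.
    - apply (continuity_pt_comp (fun l => p + l*(u-p)) f). reg.
      apply (cont_pt r). specialize (Hin p u l ltac:(lra) ltac:(lra) Hl). lra.
      apply Hc. apply Hin; lra.
    - apply (continuity_pt_comp (fun l => q + l*(v-q)) f). reg.
      apply (cont_pt r). specialize (Hin q v l ltac:(lra) ltac:(lra) Hl). lra.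
      apply Hc. apply Hin; lra. }
  assert (H0 : H 0 < 0).
  { unfold H. replace (p + 0 * (u-p)) with p by ring. replace (q + 0*(v-q)) with q by ring. lra. }
  assert (H1 : 0 < H 1).
  { unfold H. replace (p + 1 * (u-p)) with u by ring. replace (q + 1*(v-q)) with v by ring. lra. }
  destruct (IVT_interv H 0 1 Hcont ltac:(lra) H0 H1) as [l [Hl Hz]].
  unfold H in Hz.
  assert (E : p + l*(u-p) = q + l*(v-q)).
  { apply Hinj.
    - specialize (Hin p u l ltac:(lra) ltac:(lra) Hl). unfold Ico0; lra.
    - specialize (Hin q v l ltac:(lra) ltac:(lra) Hl). unfold Ico0; lra.
    - lra. }
  destruct (Req_dec l 1).
  - subst. lra.
  - assert (0 < (q-p)*(1-l)) by (apply Rmult_lt_0_compat; lra).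
    assert (0 <= l*(v-u)) by (apply Rmult_le_pos; lra). nra.
Qed.
Lemma finite_fix r z x (l : list R) : maps_into r z ->
  (forall s t, Ico0 r s -> Ico0 r t -> z s = z t -> s = t) ->
  (forall t, Ico0 r t -> z t >= t) -> Ico0 r x ->
  (forall n, In (it z n x) l) -> z x = x.
Proof.
  intros Hm Hinj Hge Hx Hl. apply NNPP; intro Hne.
  assert (Hs : forall n, it z n x < it z (S n) x).
  { induction n.
    - simpl. specialize (Hge x Hx). lra.
    - simpl in *. assert (Hi := it_in r z n x Hm Hx).
      assert (Hi2 := Hm _ Hi).
      specialize (Hge _ Hi2).
      destruct (Req_dec (z (z (it z n x))) (z (it z n x))) as [E|E]; [|lra].
      apply Hinj in E; auto. lra. }
  assert (Hmo : forall n m, (n < m)%nat -> it z n x < it z m x).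
  { intros n m Hnm. induction Hnm. apply Hs. specialize (Hs m). lra. }
  assert (Hinjn : Injective (fun n => it z n x)).
  { intros n m E. destruct (Nat.lt_trichotomy n m) as [H|[H|H]]; auto.
    - apply Hmo in H. simpl in E. lra.
    - apply Hmo in H. simpl in E. lra. }
  assert (HN := @Injective_map_NoDup _ _ _ (seq 0 (S (length l))) Hinjn (seq_NoDup _ _)).
  assert (Hinc : incl (map (fun n => it z n x) (seq 0 (S (length l)))) l).
  { intros y Hy. apply in_map_iff in Hy. destruct Hy as [n [<- _]]. auto. }
  assert (HL := NoDup_incl_length HN Hinc).
  rewrite length_map, length_seq in HL. lia.
Qed.

Lemma disc_prop r z g f t : maps_into r z -> continuous_on r z -> maps_into r g ->
  continuous_on r g -> (forall x, Ico0 r x -> g (z x) = x) -> maps_into r f ->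
  (forall x, Ico0 r x -> f (z x) = z (f x)) -> Ico0 r t ->
  cont_at r f (z t) -> cont_at r f t.
Proof.
  intros Hzm Hzc Hgm Hgc Hgz Hfm Hc Ht H.
  apply (cont_ext r (fun y => g (f (z y)))); auto.
  - intros y Hy. rewrite Hc; auto.
  - apply (cont_comp r (fun y => f (z y)) g); auto.
    all: try (intros y Hy; auto; fail).
    all: try (apply cont_comp; auto; fail).
    all: try (apply Hgc; auto; fail).
Qed.

Lemma list_below (l : list R) x : exists a, a < x /\ forall t, In t l -> ~ (a < t < x).
Proof.
  induction l as [|y l IH].
  - exists (x - 1). split; [lra|]. intros t [].
  - destruct IH as [a [Ha Ht]]. destruct (Rlt_or_le y x).
    + exists (Rmax a y). split. apply Rmax_lub_lt; auto.
      intros t [<-|Hin] Hc.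
      * assert (Hm := Rmax_r a y). lra.
      * apply (Ht t Hin). assert (Hm := Rmax_l a y). lra.
    + exists a. split; auto. intros t [<-|Hin] Hc. lra. apply (Ht t Hin Hc).
Qed.

Lemma supp_f r z f y : maps_into r z -> maps_into r f ->
  (forall s t, Ico0 r s -> Ico0 r t -> f s = f t -> s = t) ->
  (forall x, Ico0 r x -> f (z x) = z (f x)) -> supp r z y -> supp r z (f y).
Proof.
  intros Hzm Hfm Hfi Hc [Hy Hne]. split; auto. intro E. apply Hne.
  apply Hfi; auto. rewrite Hc; auto.
Qed.

Lemma supp_finv r z f v : maps_into r z ->
  (forall x, Ico0 r x -> f (z x) = z (f x)) -> Ico0 r v -> supp r z (f v) -> supp r z v.
Proof.
  intros Hzm Hc Hv [Hw Hne]. split; auto. intro E. apply Hne. rewrite <- Hc; auto. rewrite E; auto.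
Qed.

Lemma supp_it r z y n : maps_into r z ->
  (forall s t, Ico0 r s -> Ico0 r t -> z s = z t -> s = t) -> supp r z y -> supp r z (it z n y).
Proof.
  intros Hm Hinj Hy. induction n; simpl; auto.
  destruct IHn as [Hi Hne]. split; [auto|]. intro E. apply Hne. apply Hinj; auto.
Qed.

Lemma supp_itg r z g y n : maps_into r g -> (forall y, Ico0 r y -> z (g y) = y) ->
  supp r z y -> supp r z (it g n y).
Proof.
  intros Hm Hzg Hy. induction n; simpl; auto.
  destruct IHn as [Hi Hne]. split; auto. intro E. apply Hne.
  pose proof (Hzg _ Hi). congruence.
Qed.

Lemma comm_it r z f u n : maps_into r z -> (forall x, Ico0 r x -> f (z x) = z (f x)) ->
  Ico0 r u -> f (it z n u) = it z n (f u).
Proof.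
  intros Hm Hc Hu. induction n; simpl; auto. rewrite Hc. rewrite IHn; auto. apply it_in; auto.
Qed.

Lemma comm_g r z g f : maps_into r z -> maps_into r g -> maps_into r f ->
  (forall x, Ico0 r x -> g (z x) = x) -> (forall y, Ico0 r y -> z (g y) = y) ->
  (forall x, Ico0 r x -> f (z x) = z (f x)) -> forall x, Ico0 r x -> f (g x) = g (f x).
Proof.
  intros Hzm Hgm Hfm Hgz Hzg Hc x Hx.
  rewrite <- (Hzg x Hx) at 2. rewrite Hc; auto. rewrite Hgz; auto.
Qed.

Lemma it_ge r h w n : maps_into r h -> (forall t, Ico0 r t -> h t >= t) -> Ico0 r w -> w <= it h n w.
Proof.
  intros Hm Hge Hw. induction n; simpl. lra.
  assert (H := Hge _ (it_in r h n w Hm Hw)). lra.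
Qed.

Lemma it_le r h w n : maps_into r h -> (forall t, Ico0 r t -> h t <= t) -> Ico0 r w -> it h n w <= w.
Proof.
  intros Hm Hge Hw. induction n; simpl. lra.
  assert (H := Hge _ (it_in r h n w Hm Hw)). lra.
Qed.

Theorem lemma3p2 (r : R) (Z : (R -> R) -> Prop) (f : R -> R) :
  0 < r ->
  (forall z, Z z -> is_homeo r z) ->
  (forall z a, Z z -> Ico0 r a -> z a >= a) ->
  (forall z, Z z -> is_interval (supp r z)) ->
  dense_in_0r r (fun x => exists z, Z z /\ supp r z x) ->
  is_perm r f ->
  (forall z x, Z z -> Ico0 r x -> f (z x) = z (f x)) ->
  (forall x, Ico0 r x -> right_cont_at r f x) ->
  finitely_many_discont r f ->
  continuous_on r f.
Proof.
  intros Hr HZh HZge HZint Hdense [Hfm [Hfinj Hfsurj]] Hcomm Hrc [l Hl] x Hx.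
  apply NNPP; intro Hnc.
  assert (Hzinj : forall z, Z z -> forall s t, Ico0 r s -> Ico0 r t -> z s = z t -> s = t).
  { intros z Hz s t Hs Ht E. destruct (HZh z Hz) as [_ [_ [g [_ [_ [Hgz _]]]]]].
    rewrite <- (Hgz s Hs), <- (Hgz t Ht), E; auto. }
  assert (Hfix : forall z, Z z -> z x = x).
  { intros z Hz. destruct (HZh z Hz) as [Hzm [Hzc [g [Hgm [Hgc [Hgz Hzg]]]]]].
    apply (finite_fix r z x l Hzm (Hzinj z Hz) (fun t Ht => HZge z t Hz Ht) Hx).
    intro n. apply Hl. apply it_in; auto.
      induction n; simpl; auto. intro Hc. apply IHn.
      apply (disc_prop r z g f); auto. apply it_in; auto. }
  assert (Hx0 : 0 < x).
  { destruct Hx as [Hx1 Hx2]. destruct (Rle_lt_or_eq_dec 0 x Hx1) as [|E]; auto. exfalso.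
    apply Hnc. subst x.
    intros eps He. destruct (Hrc 0 (conj (Rle_refl 0) Hx2) eps He) as [d [Hd Hd']].
    exists d; split; auto.
    intros y Hy Hyd. destruct Hy. apply Hd'. split; auto. lra. apply Rabs_def2 in Hyd; lra. }
  destruct (list_below l x) as [a1 [Ha1 Ha1']].
  set (a := Rmax a1 0).
  assert (Ha : 0 <= a < x) by (split; [apply Rmax_r | apply Rmax_lub_lt; auto]).
  assert (Haa : a1 <= a) by apply Rmax_l.
  assert (Hca : forall t, a < t < x -> cont_at r f t).
  { intros t Ht. apply NNPP; intro Hn. apply (Ha1' t). apply Hl; auto.
    destruct Hx; unfold Ico0; lra. lra. }
  assert (Hge : x <= f x).
  { apply Rnot_lt_le; intro Hlt.
    destruct (Hrc x Hx (x - f x) ltac:(lra)) as [d [Hd Hd']].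
    destruct Hx as [Hx1 Hx2].
    destruct (dense_between r _ x (Rmin (x+d) r) ltac:(lra)
      ltac:(apply Rmin_glb_lt; lra) ltac:(apply Rmin_r) Hdense) as [y [[z [Hz Hy]] Hyb]].
    assert (H1 := Rmin_l (x+d) r).
    destruct (HZh z Hz) as [Hzm _].
    assert (Hfy := supp_f r z f y Hzm Hfm Hfinj (fun u Hu => Hcomm z u Hz Hu) Hy).
    assert (Hxy := side_right r z x y (f y) (HZint z Hz) (Hfix z Hz) Hy Hfy ltac:(lra)).
    destruct Hy as [Hyi _].
    specialize (Hd' y Hyi ltac:(lra) ltac:(lra)). apply Rabs_def2 in Hd'. lra. }
  assert (Hmono : forall u v, a < u -> u < v -> v < x -> f u < f v).
  { destruct (dense_between r _ a x ltac:(lra) ltac:(lra) ltac:(destruct Hx; lra) Hdense)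
      as [t [[z [Hz Ht]] Htb]].
    destruct (HZh z Hz) as [Hzm _].
    assert (Hzt := supp_it r z t 1 Hzm (Hzinj z Hz) Ht). simpl in Hzt.
    assert (Hztx := side_left r z x t (z t) (HZint z Hz) (Hfix z Hz) Ht Hzt ltac:(lra)).
    assert (Hzt2 : t < z t).
    { destruct Ht as [Ht1 Ht2]. specialize (HZge z t Hz Ht1). lra. }
    assert (Hft := supp_f r z f t Hzm Hfm Hfinj (fun u Hu => Hcomm z u Hz Hu) Ht).
    assert (Hf2 : f t < f (z t)).
    { rewrite (Hcomm z t Hz (proj1 Ht)). destruct Hft as [Hft1 Hft2].
      specialize (HZge z (f t) Hz Hft1). lra. }
    apply (mono r f a x t (z t)); auto; try lra. destruct Hx; lra. }
  assert (Hle : f x <= x).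
  { apply Rnot_lt_le; intro Hlt.
    set (eps := (f x - x)/2).
    destruct (Hrc x Hx eps ltac:(unfold eps; lra)) as [d [Hd Hd']].
    destruct Hx as [Hx1 Hx2].
    set (c := Rmin (Rmin (x+d) (x + eps)) r).
    assert (Hc1 := Rmin_l (Rmin (x+d) (x + eps)) r).
    assert (Hc2 := Rmin_r (Rmin (x+d) (x + eps)) r).
    assert (Hc3 := Rmin_l (x+d) (x + eps)).
    assert (Hc4 := Rmin_r (x+d) (x + eps)).
    assert (Hxc : x < c).
    { unfold c. apply Rmin_glb_lt; [apply Rmin_glb_lt|]; unfold eps; lra. }
    destruct (dense_between r _ x c ltac:(lra) Hxc ltac:(unfold c; lra) Hdense)
      as [w [[z [Hz Hw]] Hwb]].
    destruct (HZh z Hz) as [Hzm [Hzc [g [Hgm [Hgc [Hgz Hzg]]]]]].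
    destruct Hw as [Hwi Hwne].
    destruct (Hfsurj w Hwi) as [v [Hv Hfv]].
    assert (Hvs : supp r z v).
    { apply (supp_finv r z f v Hzm (fun u Hu => Hcomm z u Hz Hu) Hv). rewrite Hfv. split; auto. }
    assert (Hgle : forall t, Ico0 r t -> g t <= t).
    { intros t Ht. rewrite <- (Hzg t Ht) at 2. specialize (HZge z (g t) Hz (Hgm t Ht)). lra. }
    assert (Hex : exists n, it g n v < w).
    { apply NNPP; intro Hno.
      assert (Hall : forall n, w <= it g n v).
      { intro n. apply Rnot_lt_le. intro. apply Hno. eauto. }
      destruct (lem_down r g v w Hgm Hgc Hgle Hv ltac:(lra) Hall) as [m [Hm Hgm']].
      assert (Hms : supp r z m) by (apply (HZint z Hz w v m); auto; split; auto).
      destruct Hms as [Hmi Hmne]. apply Hmne. rewrite <- Hgm' at 1. apply Hzg; auto. }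
    destruct Hex as [n Hn].
    assert (Hss := supp_itg r z g v n Hgm Hzg Hvs).
    assert (Hxs := side_right r z x w _ (HZint z Hz) (Hfix z Hz) (conj Hwi Hwne) Hss ltac:(lra)).
    assert (Hfs : f (it g n v) = it g n w).
    { rewrite <- Hfv. apply (comm_it r); auto. intros u Hu. apply (comm_g r z); auto. }
    assert (Hfsw := it_le r g w n Hgm Hgle Hwi).
    destruct Hss as [Hsi _].
    unfold c in Hwb. specialize (Hd' _ Hsi ltac:(lra) ltac:(lra)). apply Rabs_def2 in Hd'. unfold eps in *. lra. }
  assert (Hfx : f x = x) by lra.
  apply Hnc. intros eps Heps.
  destruct (Hrc x Hx eps Heps) as [dR [HdR HdR']].
  destruct Hx as [Hx1 Hx2].
  assert (Hm1 := Rmax_l a (x - eps)). assert (Hm2 := Rmax_r a (x - eps)).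
  destruct (dense_between r _ (Rmax a (x - eps)) x ltac:(lra)
      ltac:(apply Rmax_lub_lt; lra) ltac:(lra) Hdense) as [w [[z [Hz Hw]] Hwb]].
  destruct (HZh z Hz) as [Hzm [Hzc _]].
  destruct Hw as [Hwi Hwne].
  destruct (Hfsurj w Hwi) as [v [Hv Hfv]].
  assert (Hvs : supp r z v).
  { apply (supp_finv r z f v Hzm (fun u Hu => Hcomm z u Hz Hu) Hv). rewrite Hfv. split; auto. }
  assert (HzgeZ : forall t, Ico0 r t -> z t >= t) by (intros; apply HZge; auto).
  assert (Hex : exists n, w < it z n v).
  { apply NNPP; intro Hno.
    assert (Hall : forall n, it z n v <= w).
    { intro n. apply Rnot_lt_le. intro. apply Hno. eauto. }
    destruct (lem_up r z v w Hzm Hzc HzgeZ Hv ltac:(destruct Hwi; lra) Hall) as [m [Hm Hzm']].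
    assert (Hms : supp r z m) by (apply (HZint z Hz v w m); auto; split; auto).
    destruct Hms as [Hmi Hmne]. auto. }
  destruct Hex as [n Hn].
  assert (Hss := supp_it r z v n Hzm (Hzinj z Hz) Hvs).
  assert (Hsx := side_left r z x w _ (HZint z Hz) (Hfix z Hz) (conj Hwi Hwne) Hss ltac:(lra)).
  assert (Hfs : f (it z n v) = it z n w).
  { rewrite <- Hfv. apply (comm_it r); auto. }
  assert (Hfsw := it_ge r z w n Hzm HzgeZ Hwi).
  set (s := it z n v) in *.
  exists (Rmin dR (x - s)). split.
  { apply Rmin_pos; lra. }
  intros y Hy Hyd.
  assert (Hd1 := Rmin_l dR (x - s)). assert (Hd2 := Rmin_r dR (x - s)).
  apply Rabs_def2 in Hyd.
  destruct (Rle_or_lt x y) as [Hxy|Hxy].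
  - apply HdR'; auto; lra.
  - assert (Hlow : f s < f y) by (apply Hmono; lra).
    assert (Hup : f y < x).
    { destruct Hy as [Hy1 Hy2].
      destruct (dense_between r _ y x Hy1 Hxy ltac:(lra) Hdense) as [y' [[z' [Hz' Hy']] Hyb']].
      destruct (HZh z' Hz') as [Hzm' _].
      assert (Hfy' := supp_f r z' f y' Hzm' Hfm Hfinj (fun u Hu => Hcomm z' u Hz' Hu) Hy').
      assert (Hlt := side_left r z' x y' (f y') (HZint z' Hz') (Hfix z' Hz') Hy' Hfy' ltac:(lra)).
      assert (f y < f y') by (apply Hmono; lra). lra. }
    rewrite Hfx. apply Rabs_def1; lra.
Qed.
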